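(* Consider a single element with nodes $1,\dots,N$ and SBP operators in $d$ directions: matrices $D^j\in\mathbb{R}^{N\times N}$ with $D^j\mathbf{1}=0$, a diagonal positive mass matrix $M$, and diagonal matrices $E^j=\operatorname{diag}(e^j_1,\dots,e^j_N)$ (the boundary operators $R^TBN^jR$) such that $MD^j+(D^j)^TM=E^j$ for $j=1,\dots,d$. Let $Y\subset\mathbb{R}^n$, $\omega\colon Y\to\mathbb{R}^n$, and for each $j$ let $f^j\colon Y\to\mathbb{R}^n$, $F^j\colon Y\to\mathbb{R}$, $H^j\colon Y\to\mathbb{R}^{n\times m}$, $g^j\colon Y\to\mathbb{R}^m$, $\psi^j=\omega\cdot f^j-F^j$; let $\alpha\in\mathbb{R}$. Let volume fluxes $f^{\mathrm{vol},j}$, $H^{\mathrm{vol},j}$ be symmetric and consistent with $f^j,H^j$, and surface fluxes $f^{\mathrm{num},j}$, $H^{\mathrm{num},j}$ be consistent with $f^j,H^j$, and assume both pairs satisfy, for all $u_-,u_+\in Y$ and all $j$, $$[\![\omega]\!]\cdot f^{\cdot,j}-\alpha\{\{\omega\}\}\cdot H^{\cdot,j}[\![g^j]\!]-(1-\alpha)\{\{\omega\cdot H^j\}\}[\![g^j]\!]=[\![\psi^j]\!].$$ Given nodal states $u_1,\dots,u_N\in Y$ and, for each node $k$ and direction $j$, an exterior state $u^+_{k,j}\in Y$, define $$\mathrm{VOL}_i=\sum_{j=1}^d\sum_{k=1}^N\Big(2D^j_{i,k}f^{\mathrm{vol},j}(u_i,u_k)+\alpha D^j_{i,k}H^{\mathrm{vol},j}(u_i,u_k)\big(g^j(u_k)-g^j(u_i)\big)+(1-\alpha)D^j_{i,k}H^j(u_i)\big(g^j(u_k)-g^j(u_i)\big)\Big),$$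 $$\mathrm{SURF}_i=M_{ii}^{-1}\sum_{j=1}^de^j_i\Big(f^{\mathrm{num},j}(u_i,u^+_{i,j})-f^j(u_i)+\tfrac\alpha2H^{\mathrm{num},j}(u_i,u^+_{i,j})\big(g^j(u^+_{i,j})-g^j(u_i)\big)+\tfrac{1-\alpha}2H^j(u_i)\big(g^j(u^+_{i,j})-g^j(u_i)\big)\Big),$$ and $\partial_tu_i=-\mathrm{VOL}_i-\mathrm{SURF}_i$. Then $$\sum_{i=1}^NM_{ii}\,\omega(u_i)\cdot\partial_tu_i=-\sum_{k=1}^N\sum_{j=1}^de^j_k\,F^{\mathrm{num},j}(u_k,u^+_{k,j}),$$ where $F^{\mathrm{num},j}=\{\{F^j\}\}+\{\{\omega\}\}\cdot f^{\mathrm{num},j}-\{\{\omega\cdot f^j\}\}-\tfrac\alpha4[\![\omega]\!]\cdot H^{\mathrm{num},j}[\![g^j]\!]-\tfrac{1-\alpha}4[\![\omega\cdot H^j]\!][\![g^j]\!]$, which is consistent: $F^{\mathrm{num},j}(u,u)=F^j(u)$.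
   Context: For a function $a$ on $Y$ and a pair of states $(u_-,u_+)$: $\{\{a\}\}=\tfrac12(a(u_-)+a(u_+))$, $[\![a]\!]=a(u_+)-a(u_-)$; two-point fluxes are evaluated at $(u_-,u_+)$; $\omega\cdot H^j=\omega^TH^j$. In applications $\omega=U'$ for an entropy $U$ with entropy fluxes $F^j$, $e^j_k$ is the boundary quadrature weight at node $k$ times the $j$-th component of the outward normal (zero at interior nodes), and $u^+_{k,j}$ is the neighboring element's trace; the identity expresses that the element entropy changes only by interface numerical entropy fluxes (entropy conservation). *)

(* Defs.v *)
From mathcomp Require Import all_boot all_order all_algebra.
Set Implicit Arguments. Unset Strict Implicit. Unset Printing Implicit Defensive.
Import Order.TTheory GRing.Theory Num.Theory.
Local Open Scope ring_scope.

Definition dot (R : realFieldType) (k : nat) (a b : 'cV[R]_k) : R := (a^T *m b) 0 0.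

Definition avg (R : realFieldType) (V : lmodType R) (T : Type) (a : T -> V) (um up : T) : V :=
  2^-1 *: (a um + a up).
Definition jump (V : zmodType) (T : Type) (a : T -> V) (um up : T) : V := a up - a um.

Definition psi (R : realFieldType) (n : nat) (omega f : 'cV[R]_n -> 'cV[R]_n)
  (F : 'cV[R]_n -> R) (u : 'cV[R]_n) : R := dot (omega u) (f u) - F u.

Definition flux_condition (R : realFieldType) (n m : nat) (Y : 'cV[R]_n -> Prop)
  (omega f : 'cV[R]_n -> 'cV[R]_n) (F : 'cV[R]_n -> R)
  (H : 'cV[R]_n -> 'M[R]_(n, m)) (g : 'cV[R]_n -> 'cV[R]_m) (alpha : R)
  (fl : 'cV[R]_n -> 'cV[R]_n -> 'cV[R]_n) (Hl : 'cV[R]_n -> 'cV[R]_n -> 'M[R]_(n, m)) :=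
  forall um up, Y um -> Y up ->
    dot (jump omega um up) (fl um up)
    - alpha * dot (avg omega um up) (Hl um up *m jump g um up)
    - (1 - alpha) * ((avg (fun w => (omega w)^T *m H w) um up) *m jump g um up) 0 0
    = jump (psi omega f F) um up.

Definition VOL (R : realFieldType) (n m N d : nat) (D : 'I_d -> 'M[R]_N) (alpha : R)
  (H : 'I_d -> 'cV[R]_n -> 'M[R]_(n, m)) (g : 'I_d -> 'cV[R]_n -> 'cV[R]_m)
  (fvol : 'I_d -> 'cV[R]_n -> 'cV[R]_n -> 'cV[R]_n)
  (Hvol : 'I_d -> 'cV[R]_n -> 'cV[R]_n -> 'M[R]_(n, m))
  (u : 'I_N -> 'cV[R]_n) (i : 'I_N) : 'cV[R]_n :=
  \sum_(j < d) \sum_(k < N)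
    ((2 * D j i k) *: fvol j (u i) (u k)
     + (alpha * D j i k) *: (Hvol j (u i) (u k) *m (g j (u k) - g j (u i)))
     + ((1 - alpha) * D j i k) *: (H j (u i) *m (g j (u k) - g j (u i)))).

(* Surface term SURF_i; e j i is the i-th diagonal entry of E^j *)
Definition SURF (R : realFieldType) (n m N d : nat) (M : 'M[R]_N) (e : 'I_d -> 'I_N -> R)
  (alpha : R) (f : 'I_d -> 'cV[R]_n -> 'cV[R]_n)
  (H : 'I_d -> 'cV[R]_n -> 'M[R]_(n, m)) (g : 'I_d -> 'cV[R]_n -> 'cV[R]_m)
  (fnum : 'I_d -> 'cV[R]_n -> 'cV[R]_n -> 'cV[R]_n)
  (Hnum : 'I_d -> 'cV[R]_n -> 'cV[R]_n -> 'M[R]_(n, m))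
  (u : 'I_N -> 'cV[R]_n) (uplus : 'I_N -> 'I_d -> 'cV[R]_n) (i : 'I_N) : 'cV[R]_n :=
  (M i i)^-1 *: \sum_(j < d) e j i *:
    (fnum j (u i) (uplus i j) - f j (u i)
     + (alpha / 2) *: (Hnum j (u i) (uplus i j) *m (g j (uplus i j) - g j (u i)))
     + ((1 - alpha) / 2) *: (H j (u i) *m (g j (uplus i j) - g j (u i)))).

Definition Fnum (R : realFieldType) (n m : nat) (omega f : 'cV[R]_n -> 'cV[R]_n)
  (F : 'cV[R]_n -> R) (H : 'cV[R]_n -> 'M[R]_(n, m)) (g : 'cV[R]_n -> 'cV[R]_m)
  (alpha : R) (fnum : 'cV[R]_n -> 'cV[R]_n -> 'cV[R]_n)
  (Hnum : 'cV[R]_n -> 'cV[R]_n -> 'M[R]_(n, m)) (um up : 'cV[R]_n) : R :=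
  2^-1 * (F um + F up) + dot (avg omega um up) (fnum um up)
  - 2^-1 * (dot (omega um) (f um) + dot (omega up) (f up))
  - alpha / 4 * dot (jump omega um up) (Hnum um up *m jump g um up)
  - (1 - alpha) / 4 * ((jump (fun w => (omega w)^T *m H w) um up) *m jump g um up) 0 0.

(* Main.v *)
Require Import Defs.
From mathcomp Require Import all_boot all_order all_algebra ring lra.
Import Order.TTheory GRing.Theory Num.Theory.
Local Open Scope ring_scope.
Set Implicit Arguments. Unset Strict Implicit.

Section S.
Variable R : realFieldType.

Lemma dotE n (a b : 'cV[R]_n) : dot a b = \sum_l a l 0 * b l 0.
Proof. by rewrite /dot mxE; apply: eq_bigr => l _; rewrite mxE. Qed.
Lemma dotDr n (a b c : 'cV[R]_n) : dot a (b + c) = dot a b + dot a c.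
Proof. by rewrite !dotE -big_split; apply: eq_bigr => l _; rewrite mxE mulrDr. Qed.
Lemma dotDl n (a b c : 'cV[R]_n) : dot (b + c) a = dot b a + dot c a.
Proof. by rewrite !dotE -big_split; apply: eq_bigr => l _; rewrite mxE mulrDl. Qed.
Lemma dotZr n x (a b : 'cV[R]_n) : dot a (x *: b) = x * dot a b.
Proof. by rewrite !dotE mulr_sumr; apply: eq_bigr => l _; rewrite mxE mulrCA. Qed.
Lemma dotZl n x (a b : 'cV[R]_n) : dot (x *: b) a = x * dot b a.
Proof. by rewrite !dotE mulr_sumr; apply: eq_bigr => l _; rewrite mxE mulrA. Qed.
Lemma dotNr n (a b : 'cV[R]_n) : dot a (- b) = - dot a b.
Proof. by rewrite -scaleN1r dotZr mulN1r. Qed.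
Lemma dotNl n (a b : 'cV[R]_n) : dot (- b) a = - dot b a.
Proof. by rewrite -scaleN1r dotZl mulN1r. Qed.
Lemma dotBr n (a b c : 'cV[R]_n) : dot a (b - c) = dot a b - dot a c.
Proof. by rewrite dotDr dotNr. Qed.
Lemma dotBl n (a b c : 'cV[R]_n) : dot (b - c) a = dot b a - dot c a.
Proof. by rewrite dotDl dotNl. Qed.
Lemma dot0r n (a : 'cV[R]_n) : dot a 0 = 0.
Proof. by rewrite -(scale0r 0) dotZr mul0r. Qed.
Lemma dot_sumr n I (r : seq I) (P : pred I) (a : 'cV[R]_n) (F : I -> 'cV[R]_n) :
  dot a (\sum_(i <- r | P i) F i) = \sum_(i <- r | P i) dot a (F i).
Proof. exact: (big_morph _ (dotDr a) (dot0r a)). Qed.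
Lemma rowterm n m (x : R) (Hm Hm' : 'M[R]_(n,m)) (a b : 'cV[R]_n) (G : 'cV[R]_m) :
  ((x *: (a^T *m Hm + b^T *m Hm')) *m G) 0 0 = x * (dot a (Hm *m G) + dot b (Hm' *m G)).
Proof. rewrite -scalemxAl mulmxDl. rewrite [LHS]mxE [X in _ * X]mxE /dot !mulmxA. by []. Qed.
Lemma vol_pair n m (Y : 'cV[R]_n -> Prop) omega f F (H : 'cV[R]_n -> 'M[R]_(n,m)) g alpha fl Hl
  (hc : flux_condition Y omega f F H g alpha fl Hl)
  (hsf : forall a b, Y a -> Y b -> fl a b = fl b a)
  (hsH : forall a b, Y a -> Y b -> Hl a b = Hl b a) x y (Yx : Y x) (Yy : Y y) :
  let a := fun x y => 2 * dot (omega x) (fl x y) + alpha * dot (omega x) (Hl x y *m (g y - g x))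
     + (1 - alpha) * dot (omega x) (H x *m (g y - g x)) in
  a x y - a y x = -2 * (psi omega f F y - psi omega f F x).
Proof.
move=> a; have := hc x y Yx Yy; rewrite /jump /avg /= rowterm dotZl !dotDl ?dotNl.
move=> <-; rewrite /a hsf // hsH // -[g x - g y]opprB !mulmxN !dotNr; by field.
Qed.

Lemma sbp_sum N (Q a : 'I_N -> 'I_N -> R) (e p : 'I_N -> R)
 (hQ : forall i k, Q i k + Q k i = (i == k)%:R * e i)
 (hrow : forall i, \sum_k Q i k = 0)
 (ha : forall i k, a i k - a k i = -2 * (p k - p i)) :
 \sum_i \sum_k Q i k * a i k = 2^-1 * \sum_i e i * a i i - \sum_k e k * p k.
Proof.
have delta (F : 'I_N -> R) k : \sum_i (i == k)%:R * F i = F k.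
  rewrite (bigD1 k) //= eqxx mul1r big1 ?addr0 // => i /negbTE ->; by rewrite mul0r.
have colsum k : \sum_i Q i k = e k.
  transitivity (\sum_i ((i == k)%:R * e i - Q k i)).
    by apply: eq_bigr => i _; rewrite -(hQ i k); ring.
  by rewrite sumrB delta hrow subr0.
set S := LHS.
have hS : S + S = \sum_i e i * a i i - 2 * \sum_k e k * p k.
  rewrite /S [X in _ + X]exchange_big /= -big_split /=.
  transitivity (\sum_i \sum_k ((i == k)%:R * e i * a k i + Q i k * (a i k - a k i))).
    apply: eq_bigr => i _; rewrite -big_split; apply: eq_bigr => k _ /=.
    have -> : Q k i = (i == k)%:R * e i - Q i k by rewrite -(hQ i k); ring.
    ring.
  rewrite (eq_bigr (fun i => \sum_k ((i == k)%:R * e i * a k i) + \sum_k Q i k * (a i k - a k i))); last by move=> i _; rewrite big_split.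
  rewrite big_split /=.
  congr (_ + _).
    apply: eq_bigr => i _.
    transitivity (\sum_k ((k == i)%:R * (e i * a k i))).
      by apply: eq_bigr => k _; rewrite eq_sym mulrA.
    by rewrite delta.
  transitivity (-2 * (\sum_i \sum_k Q i k * p k - \sum_i \sum_k Q i k * p i)).
    rewrite -sumrB mulr_sumr; apply: eq_bigr => i _.
    rewrite -sumrB mulr_sumr; apply: eq_bigr => k _.
    rewrite ha; ring.
  have -> : \sum_i \sum_k Q i k * p i = 0.
    by apply: big1 => i _; rewrite -mulr_suml hrow mul0r.
  rewrite exchange_big /=.
  under eq_bigr do rewrite -mulr_suml colsum.
  by rewrite subr0 mulNr.
clearbody S; have -> : S = 2^-1 * (S + S) by field.
rewrite hS; by field.
Qed.
Lemma dot0l n (a : 'cV[R]_n) : dot 0 a = 0.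
Proof. by rewrite -(scale0r 0) dotZl mul0r. Qed.
Lemma rowterm2 n m (Hm Hm' : 'M[R]_(n,m)) (a b : 'cV[R]_n) (G : 'cV[R]_m) :
  ((a^T *m Hm - b^T *m Hm') *m G) 0 0 = dot a (Hm *m G) - dot b (Hm' *m G).
Proof. rewrite mulmxBl. rewrite [LHS]mxE [X in _ + X]mxE /dot !mulmxA. by []. Qed.

Lemma surf_id n m (Y : 'cV[R]_n -> Prop) omega f F (H : 'cV[R]_n -> 'M[R]_(n,m)) g alpha fl Hl
  (hc : flux_condition Y omega f F H g alpha fl Hl) x y (Yx : Y x) (Yy : Y y) :
  F x + dot (omega x) (fl x y - f x + (alpha / 2) *: (Hl x y *m (g y - g x))
       + ((1 - alpha) / 2) *: (H x *m (g y - g x)))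
  = Fnum omega f F H g alpha fl Hl x y.
Proof.
have := hc x y Yx Yy; rewrite /Fnum /jump /avg /psi /= rowterm rowterm2 !dotZl !dotDl ?dotNl.
rewrite !dotDr !dotZr ?dotNr => h.
lra.
Qed.
End S.
Theorem mainTheorem17 (R : realFieldType) (n m N d : nat)
  (D : 'I_d -> 'M[R]_N) (M : 'M[R]_N) (e : 'I_d -> 'I_N -> R)
  (Y : 'cV[R]_n -> Prop) (omega : 'cV[R]_n -> 'cV[R]_n)
  (f : 'I_d -> 'cV[R]_n -> 'cV[R]_n) (F : 'I_d -> 'cV[R]_n -> R)
  (H : 'I_d -> 'cV[R]_n -> 'M[R]_(n, m)) (g : 'I_d -> 'cV[R]_n -> 'cV[R]_m)
  (alpha : R)
  (fvol fnum : 'I_d -> 'cV[R]_n -> 'cV[R]_n -> 'cV[R]_n)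
  (Hvol Hnum : 'I_d -> 'cV[R]_n -> 'cV[R]_n -> 'M[R]_(n, m))
  (u : 'I_N -> 'cV[R]_n) (uplus : 'I_N -> 'I_d -> 'cV[R]_n)
  (* SBP operators *)
  (hD1 : forall j, D j *m (const_mx 1 : 'cV[R]_N) = 0)
  (hMdiag : is_diag_mx M) (hMpos : forall i, 0 < M i i)
  (hSBP : forall j, M *m D j + (D j)^T *m M = diag_mx (\row_k e j k))
  (* volume fluxes: symmetric and consistent *)
  (hfvol_sym : forall j a b, Y a -> Y b -> fvol j a b = fvol j b a)
  (hHvol_sym : forall j a b, Y a -> Y b -> Hvol j a b = Hvol j b a)
  (hfvol_cons : forall j a, Y a -> fvol j a a = f j a)
  (hHvol_cons : forall j a, Y a -> Hvol j a a = H j a)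
  (* surface fluxes: consistent *)
  (hfnum_cons : forall j a, Y a -> fnum j a a = f j a)
  (hHnum_cons : forall j a, Y a -> Hnum j a a = H j a)
  (* entropy conditions *)
  (hvol_ec : forall j, flux_condition Y omega (f j) (F j) (H j) (g j) alpha (fvol j) (Hvol j))
  (hnum_ec : forall j, flux_condition Y omega (f j) (F j) (H j) (g j) alpha (fnum j) (Hnum j))
  (* states *)
  (hu : forall i, Y (u i)) (huplus : forall i j, Y (uplus i j)) :
  let dudt i := - VOL D alpha H g fvol Hvol u i - SURF M e alpha f H g fnum Hnum u uplus i in
  (\sum_(i < N) M i i * dot (omega (u i)) (dudt i)
   = - \sum_(k < N) \sum_(j < d)
         e j k * Fnum omega (f j) (F j) (H j) (g j) alpha (fnum j) (Hnum j) (u k) (uplus k j))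
  /\ (forall j a, Y a -> Fnum omega (f j) (F j) (H j) (g j) alpha (fnum j) (Hnum j) a a = F j a).
Proof.
move=> dudt; split; last first.
  move=> j a Ya; rewrite /Fnum /avg /jump hfnum_cons // hHnum_cons // !subrr ?mulmx0 ?dot0l ?dot0r.
  rewrite mxE dotZl dotDl; by field.
pose av j x y := 2 * dot (omega x) (fvol j x y) + alpha * dot (omega x) (Hvol j x y *m (g j y - g j x))
     + (1 - alpha) * dot (omega x) (H j x *m (g j y - g j x)).
pose S j i := fnum j (u i) (uplus i j) - f j (u i)
     + (alpha / 2) *: (Hnum j (u i) (uplus i j) *m (g j (uplus i j) - g j (u i)))
     + ((1 - alpha) / 2) *: (H j (u i) *m (g j (uplus i j) - g j (u i))).
have hV i : M i i * dot (omega (u i)) (VOL D alpha H g fvol Hvol u i)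
    = \sum_j \sum_k (M i i * D j i k) * av j (u i) (u k).
  rewrite /VOL dot_sumr mulr_sumr; apply: eq_bigr => j _.
  rewrite dot_sumr mulr_sumr; apply: eq_bigr => k _.
  rewrite !dotDr !dotZr /av; ring.
have hS i : M i i * dot (omega (u i)) (SURF M e alpha f H g fnum Hnum u uplus i)
    = \sum_j e j i * dot (omega (u i)) (S j i).
  rewrite /SURF dotZr mulrA mulfV ?mul1r; last by rewrite gt_eqF.
  by rewrite dot_sumr; apply: eq_bigr => j _; rewrite dotZr.
have hQ j i k : M i i * D j i k + M k k * D j k i = (i == k)%:R * e j i.
  have /is_diag_mxP hMd := hMdiag.
  have := congr1 (fun A : 'M[R]_N => A i k) (hSBP j); rewrite !mxE => h.
  rewrite mulr_natl -h; congr (_ + _).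
    rewrite (bigD1 i) //= big1 ?addr0 // => l hl.
    by rewrite hMd ?mul0r // eq_sym.
  rewrite (bigD1 k) //= big1 ?addr0 ?mxE ?[D j k i * _]mulrC // => l hl.
  by rewrite hMd ?mulr0.
have hrow j i : \sum_k M i i * D j i k = 0.
  rewrite -mulr_sumr (_ : \sum_k D j i k = 0) ?mulr0 //.
  transitivity ((D j *m (const_mx 1 : 'cV[R]_N)) i 0); last by rewrite hD1 mxE.
  by rewrite mxE; apply: eq_bigr => k _; rewrite mxE mulr1.
have hvol j : \sum_i \sum_k (M i i * D j i k) * av j (u i) (u k) = \sum_k e j k * F j (u k).
  rewrite (sbp_sum (e := e j) (p := fun k => psi omega (f j) (F j) (u k))) //.
  - rewrite mulr_sumr -sumrB; apply: eq_bigr => k _.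
    rewrite /av /psi !subrr !mulmx0 !dot0r hfvol_cons //; by field.
  - by move=> i k; exact: (vol_pair (hvol_ec j) (hfvol_sym j) (hHvol_sym j) (hu i) (hu k)).
transitivity (- \sum_j \sum_k e j k * F j (u k) - \sum_i \sum_j e j i * dot (omega (u i)) (S j i)).
  rewrite -(eq_bigr _ (fun i _ => hS i)) -(eq_bigr _ (fun j _ => hvol j)) exchange_big /=.
  rewrite -(eq_bigr _ (fun i _ => hV i)) -sumrN -sumrB; apply: eq_bigr => i _.
  by rewrite /dudt dotBr dotNr mulrBr mulrN.
rewrite [X in - X - _]exchange_big /= -opprD -big_split /=; congr (- _).
apply: eq_bigr => k _; rewrite -big_split; apply: eq_bigr => j _ /=.
rewrite -(surf_id (hnum_ec j) (hu k) (huplus k j)) /S; ring.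
Qed.
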